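(* Let $S=\{1,2\}$ and $N=\{1,\ldots,n\}$, and identify each belief with the probability it assigns to state $1$. Given individual beliefs $p_1,\ldots,p_n\in[0,1]$, the parimutuel equilibrium price (identified with the price/probability of state 1) of the parimutuel market with equal wealth is \[\mathrm{med}\Big(p_1,\ldots,p_n,\tfrac{1}{n},\tfrac{2}{n},\ldots,\tfrac{n-1}{n}\Big).\]
   Context: For an odd number $m$ of reals $x_1,\ldots,x_m$, $\mathrm{med}(x_1,\ldots,x_m)$ is the value $x^*$ among them with $|\{i:x_i<x^*\}|\le\frac{m-1}{2}$ and $|\{i:x_i>x^*\}|\le\frac{m-1}{2}$. The parimutuel market has consumers $i\in N$, each with consumption set $\mathbb{R}^S_+$ and linear utility $x\mapsto p_i\cdot x$ (where $p_i$ is identified with the vector $(p_i,1-p_i)$). A parimutuel equilibrium with equal wealth is a pair $(\rho,\mathbf{x})$ with $\rho\in\Delta(S)$ and $\mathbf{x}=(x_1,\ldots,x_n)\in(\mathbb{R}^S_+)^N$ such that (1) for each $i$, $\rho\cdot x_i\le 1/n$ and $p_i\cdot x_i\ge p_i\cdot y$ for every $y\in\mathbb{R}^S_+$ with $\rho\cdot y\le 1/n$; and (2) $\sum_i x_i=(1,1)$. The parimutuel price is the $\rho$ of such an equilibrium. *)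

(* Defs.v *)
(* Goods/states S = {1,2}; a bundle in R^S is a pair (state1, state2). *)
From HB Require Import structures.
From mathcomp Require Import all_boot all_order all_algebra.
Set Implicit Arguments. Unset Strict Implicit. Unset Printing Implicit Defensive.
Import Order.TTheory GRing.Theory Num.Theory.
Local Open Scope ring_scope.

Definition dot {R : realFieldType} (a b : R * R) : R := a.1 * b.1 + a.2 * b.2.

Definition belief {R : realFieldType} (p : R) : R * R := (p, 1 - p).

Definition in_simplex {R : realFieldType} (rho : R * R) : Prop :=
  0 <= rho.1 /\ 0 <= rho.2 /\ rho.1 + rho.2 = 1.

Definition nonneg2 {R : realFieldType} (y : R * R) : Prop := 0 <= y.1 /\ 0 <= y.2.

Definition parimutuel_eq {R : realFieldType} (n : nat) (p : 'I_n -> R)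
    (rho : R * R) (x : 'I_n -> R * R) : Prop :=
  in_simplex rho /\
  (forall i : 'I_n,
      nonneg2 (x i) /\
      dot rho (x i) <= n%:R^-1 /\
      (forall y : R * R, nonneg2 y -> dot rho y <= n%:R^-1 ->
         dot (belief (p i)) y <= dot (belief (p i)) (x i))) /\
  (\sum_(i < n) (x i).1 = 1 /\ \sum_(i < n) (x i).2 = 1).

Definition is_med {R : realFieldType} (s : seq R) (m : R) : Prop :=
  m \in s /\
  (count (fun y : R => (y < m)%R) s <= (size s).-1./2)%N /\
  (count (fun y : R => (m < y)%R) s <= (size s).-1./2)%N.

Definition med_list {R : realFieldType} (n : nat) (p : 'I_n -> R) : seq R :=
  [seq p i | i <- enum 'I_n] ++ [seq k%:R / n%:R | k <- iota 1 n.-1].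

(* Main.v *)
Require Import Defs.
From HB Require Import structures.
From mathcomp Require Import all_boot all_order all_algebra.
From mathcomp Require Import lra ring zify.
Import Order.TTheory GRing.Theory Num.Theory.
Local Open Scope ring_scope.

Section S.
Variable R : realFieldType.
Variable n : nat.
Variable p : 'I_n -> R.
Hypothesis n0 : (0 < n)%N.
Hypothesis p01 : forall i, 0 <= p i <= 1.

Definition cA r := count (fun i => r < p i) (enum 'I_n).
Definition cB r := count (fun i => p i < r) (enum 'I_n).
Definition cC r := count (fun i => p i == r) (enum 'I_n).

Lemma count3 r : (cA r + cB r + cC r = n)%N.
Proof.
rewrite /cA/cB/cC; apply: etrans (size_enum_ord n).
elim: (enum 'I_n) => //= i s IH.
rewrite -IH; case: (ltgtP r (p i)) => _ /=; lia.
Qed.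

Lemma cA_le r : (cA r <= n)%N.
Proof. by rewrite -(size_enum_ord n) count_size. Qed.
Lemma cB_le r : (cB r <= n)%N.
Proof. by rewrite -(size_enum_ord n) count_size. Qed.

Lemma cA_pos r : (0 < cA r)%N -> r < 1.
Proof.
rewrite /cA -has_count => /hasP [i _ H].
by case/andP: (p01 i) => _ h; apply: lt_le_trans h.
Qed.
Lemma cB_pos r : (0 < cB r)%N -> 0 < r.
Proof.
rewrite /cB -has_count => /hasP [i _ H].
by case/andP: (p01 i) => h _; apply: le_lt_trans H.
Qed.

Lemma nR0 : 0 < n%:R :> R.
Proof. by rewrite ltr0n. Qed.

Lemma med_of r : 0 <= r <= 1 -> (cA r)%:R <= n%:R * r ->
  (cB r)%:R <= n%:R * (1 - r) -> is_med (med_list p) r.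
Proof.
move=> /andP [r0 r1] hA hB.
have nR := nR0.
have hsz : (size (med_list p)).-1./2 = n.-1.
  rewrite /med_list size_cat !size_map -enumT size_enum_ord size_iota.
  case: (n) n0 => // m _ /=. by rewrite addnn doubleK.
split; [|split]; rewrite ?hsz.
- case hC: (has (fun i => p i == r) (enum 'I_n)).
    case/hasP: hC => i _ /eqP <-.
    by rewrite /med_list mem_cat; apply/orP; left; apply: map_f; rewrite mem_enum.
  have c0 : cC r = 0%N by apply/eqP; rewrite -leqn0 leqNgt -has_count hC.
  have hAB := count3 r; rewrite c0 addn0 in hAB.
  have hnr : n%:R * r = (cA r)%:R.
    have : (cA r)%:R + (cB r)%:R = n%:R :> R by rewrite -natrD hAB.
    lra.
  have Apos : (0 < cA r)%N.
    case: (posnP (cA r)) => // A0.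
    have : (0 < cB r)%N by lia.
    move/(@cB_pos r) => rp. rewrite A0 in hnr. nra.
  have Alt : (cA r < n)%N.
    have rl := @cA_pos r Apos.
    rewrite -(ltr_nat R) -hnr. nra.
  rewrite /med_list mem_cat; apply/orP; right.
  have -> : r = (cA r)%:R / n%:R.
    by rewrite -hnr mulrAC divff ?mul1r // gt_eqF.
  apply: map_f; rewrite mem_iota; lia.
- rewrite /med_list count_cat !count_map.
  have -> : count (preim id (preim p (fun y => y < r))) (Finite.enum 'I_n) = cB r by rewrite /cB enumT.
  case: (posnP (cB r)) => [-> | Bpos].
    by rewrite add0n; apply: leq_trans (count_size _ _) _; rewrite size_iota.
  have Blt : (cB r < n)%N.
    have rp := @cB_pos r Bpos.
    rewrite -(ltr_nat R). nra.
  have -> : n.-1 = ((n - cB r).-1 + cB r)%N by lia.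
  rewrite iotaD count_cat.
  have -> : count (preim (fun k : nat => k%:R / n%:R) (fun y => y < r))
             (iota (1 + (n - cB r).-1) (cB r)) = 0%N.
    apply/eqP; rewrite -leqn0 leqNgt -has_count; apply/hasPn => k.
    rewrite mem_iota /= => /andP [hk _].
    have hk' : (n - cB r)%:R <= k%:R :> R by rewrite ler_nat; lia.
    rewrite natrB ?cB_le // in hk'.
    rewrite -leNgt ler_pdivlMr //. nra.
  apply: (@leq_trans (cB r + (n - cB r).-1)%N); last by lia.
  by rewrite addn0 leq_add2l; apply: leq_trans (count_size _ _) _; rewrite size_iota.
- rewrite /med_list count_cat !count_map.
  have -> : count (preim id (preim p (fun y => r < y))) (Finite.enum 'I_n) = cA r by rewrite /cA enumT.
  case: (posnP (cA r)) => [-> | Apos].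
    by rewrite add0n; apply: leq_trans (count_size _ _) _; rewrite size_iota.
  have Alt : (cA r < n)%N.
    have rl := @cA_pos r Apos.
    rewrite -(ltr_nat R). nra.
  have -> : n.-1 = (cA r + (n.-1 - cA r))%N by lia.
  rewrite iotaD count_cat.
  have -> : count (preim (fun k : nat => k%:R / n%:R) (fun y => r < y))
             (iota 1 (cA r)) = 0%N.
    apply/eqP; rewrite -leqn0 leqNgt -has_count; apply/hasPn => k.
    rewrite mem_iota /= => /andP [_ hk].
    rewrite -leNgt ler_pdivrMr //.
    have hk' : k%:R <= (cA r)%:R :> R by rewrite ler_nat; lia.
    nra.
  rewrite add0n.
  apply: (@leq_trans (cA r + (n.-1 - cA r))%N); last by lia.
  by rewrite leq_add2l; apply: leq_trans (count_size _ _) _; rewrite size_iota.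
Qed.

Lemma sum_seq_ind (T : eqType) (s : seq T) (P : pred T) (c : R) :
  \sum_(i <- s) (if P i then c else 0) = c *+ count P s.
Proof.
elim: s => [|y s IH]; first by rewrite big_nil.
by rewrite big_cons IH /=; case: (P y); rewrite ?add0r // mulrS.
Qed.
Lemma sum_ind (P : pred 'I_n) (c : R) :
  \sum_(i < n) (if P i then c else 0) = c *+ count P (enum 'I_n).
Proof. by rewrite -sum_seq_ind big_enum. Qed.

Lemma cnt_compl (P : pred 'I_n) :
  count (predC P) (enum 'I_n) = (n - count P (enum 'I_n))%N.
Proof.
have := count_predC P (enum 'I_n); rewrite size_enum_ord => h; lia.
Qed.

Lemma eq_cond rho x : parimutuel_eq p rho x ->
  0 <= rho.1 <= 1 /\ (cA rho.1)%:R <= n%:R * rho.1 /\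
  (cB rho.1)%:R <= n%:R * (1 - rho.1).
Proof.
have nR := nR0.
case: rho => r s /= [[r0 [s0 rs]] [hi [sum1 sum2]]].
rewrite /= in r0 s0 rs.
have es : s = 1 - r by lra.
subst s.
have dev1 i : p i < r -> (x i).1 = 0.
  case: (hi i) => [[x1n x2n] [bud opt]] hp.
  have := opt (r * (x i).1, (x i).2 + r * (x i).1).
  rewrite /dot /belief /nonneg2 /= in bud x1n x2n *.
  move=> H.
  have := H (conj (mulr_ge0 r0 x1n) (addr_ge0 x2n (mulr_ge0 r0 x1n))).
  move=> {}H.
  have : r * (r * (x i).1) + (1 - r) * ((x i).2 + r * (x i).1) <= n%:R^-1 by nra.
  move/H => H2.
  apply/eqP; rewrite eq_le x1n andbT; nra.
have dev2 i : r < p i -> (x i).2 = 0.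
  case: (hi i) => [[x1n x2n] [bud opt]] hp.
  have := opt ((x i).1 + (1 - r) * (x i).2, (1 - r) * (x i).2).
  rewrite /dot /belief /nonneg2 /= in bud x1n x2n *.
  move=> H.
  have r1 : 0 <= 1 - r by lra.
  have := H (conj (addr_ge0 x1n (mulr_ge0 r1 x2n)) (mulr_ge0 r1 x2n)).
  move=> {}H.
  have : r * ((x i).1 + (1 - r) * (x i).2) + (1 - r) * ((1 - r) * (x i).2) <= n%:R^-1 by nra.
  move/H => H2.
  apply/eqP; rewrite eq_le x2n andbT; nra.
split; first by apply/andP; split; lra.
split.
- have h : 1 - r <= \sum_(i < n) (if predC (fun i => r < p i) i then n%:R^-1 else 0).
    have e : 1 - r = (1 - r) * \sum_(i < n) (x i).2 by rewrite sum2 mulr1.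
    rewrite {1}e mulr_sumr; apply: ler_sum => i _ /=.
    case: (hi i) => [[x1n x2n] [bud _]]; rewrite /dot /= in bud.
    case: ifP => hp; last by rewrite dev2 ?mulr0 //; move/negbFE: hp.
    nra.
  rewrite sum_ind cnt_compl -(mulr_natl (n%:R^-1)) natrB ?cA_le // in h.
  rewrite -/(cA r) in h.
  have : (n%:R - (cA r)%:R) / n%:R >= 1 - r by [].
  rewrite ler_pdivlMr //; lra.
- have h : r <= \sum_(i < n) (if predC (fun i => p i < r) i then n%:R^-1 else 0).
    have e : r = r * \sum_(i < n) (x i).1 by rewrite sum1 mulr1.
    rewrite {1}e mulr_sumr; apply: ler_sum => i _ /=.
    case: (hi i) => [[x1n x2n] [bud _]]; rewrite /dot /= in bud.
    case: ifP => hp; last by rewrite dev1 ?mulr0 //; move/negbFE: hp.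
    nra.
  rewrite sum_ind cnt_compl -(mulr_natl (n%:R^-1)) natrB ?cB_le // in h.
  rewrite -/(cB r) in h.
  have : (n%:R - (cB r)%:R) / n%:R >= r by [].
  rewrite ler_pdivlMr //; lra.
Qed.

Lemma exmin (I : finType) (P : pred I) (F : I -> R) i0 :
  P i0 -> exists i, P i /\ forall j, P j -> F i <= F j.
Proof. move=> h; case: (arg_minP F h) => i Pi H; exists i; split => // j /H //. Qed.
Lemma exmax (I : finType) (P : pred I) (F : I -> R) i0 :
  P i0 -> exists i, P i /\ forall j, P j -> F j <= F i.
Proof. move=> h; case: (arg_maxP F h) => i Pi H; exists i; split => // j /H //. Qed.

Definition vv (j : ('I_n + 'I_n.+1)%type) : R :=
  match j with inl i => p i | inr k => (k : nat)%:R / n%:R end.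

Lemma vv01 j : 0 <= vv j <= 1.
Proof.
case: j => [i|k] /=; first exact: p01.
have nR := nR0.
have hk : (k <= n)%N by rewrite -ltnS.
apply/andP; split; first by rewrite divr_ge0 // ler0n.
by rewrite ler_pdivrMr // mul1r ler_nat.
Qed.

Lemma exist_r : exists r, 0 <= r <= 1 /\ (cA r)%:R <= n%:R * r /\
  (cB r)%:R <= n%:R * (1 - r).
Proof.
have nR := nR0.
pose P := fun j => (cA (vv j))%:R <= n%:R * vv j.
have P0 : P (inr ord_max).
  rewrite /P /= divff ?gt_eqF // mulr1.
  have -> : cA 1 = 0%N.
    apply/eqP; rewrite -leqn0 leqNgt -has_count; apply/hasPn => i _.
    by rewrite -leNgt; case/andP: (p01 i).
  by rewrite ler0n.
case: (@exmin _ _ vv _ P0) => js [Pjs minj].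
set r := vv js.
exists r; split; first exact: vv01.
split; first exact: Pjs.
have /andP [r0 r1] := vv01 js; rewrite -/r in r0 r1.
case: (lerP r 0) => r0'.
  have -> : cB r = 0%N.
    apply/eqP; rewrite -leqn0 leqNgt -has_count; apply/hasPn => i _.
    by rewrite -leNgt; case/andP: (p01 i) => h _; apply: le_trans h.
  rewrite mulr0n; nra.
rewrite leNgt; apply/negP => hlt.
pose Q := fun j => vv j < r.
have Q0 : Q (inr ord0) by rewrite /Q /= mul0r.
case: (@exmax _ _ vv _ Q0) => jm [Qjm maxj].
set s := vv jm.
have nP : ~~ P jm.
  apply/negP => Pjm; have := minj _ Pjm; rewrite -/r -/s.
  rewrite /Q -/s in Qjm. lra.
have As : cA s = (n - cB r)%N.
  rewrite /cA /cB -cnt_compl; apply: eq_count => i /=.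
  case: (ltP (p i) r) => h.
    have := maxj (inl i) h; rewrite /= -/s => h2.
    by apply/negbTE; rewrite -leNgt.
  rewrite /Q -/s in Qjm.
  by apply: lt_le_trans h.
have ht : (n - cB r < n.+1)%N by lia.
have Qt : Q (inr (Ordinal ht)).
  rewrite /Q /= ltr_pdivrMr // natrB ?cB_le //. nra.
have := maxj _ Qt; rewrite /= -/s ler_pdivrMr // => h1.
move: nP; rewrite /P -/s As -ltNge natrB ?cB_le // => h2.
rewrite natrB ?cB_le // in h1.
lra.
Qed.

Lemma construct r : 0 <= r <= 1 -> (cA r)%:R <= n%:R * r ->
  (cB r)%:R <= n%:R * (1 - r) -> exists x, parimutuel_eq p (r, 1 - r) x.
Proof.
move=> /andP [r0 r1] hA hB.
have nR := nR0.
have hABC : (cA r)%:R + (cB r)%:R + (cC r)%:R = n%:R :> R by rewrite -!natrD count3.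
pose u1 := (n%:R * r)^-1. pose v2 := (n%:R * (1 - r))^-1.
pose w1 := (1 - (cA r)%:R * u1) / (cC r)%:R.
pose w2 := (1 - (cB r)%:R * v2) / (cC r)%:R.
have Ar : (0 < cA r)%N -> 0 < r.
  move=> h; have : 1 <= (cA r)%:R :> R by rewrite ler1n.
  nra.
have Br : (0 < cB r)%N -> r < 1.
  move=> h; have : 1 <= (cB r)%:R :> R by rewrite ler1n.
  nra.
have hAu : (cA r)%:R * (r * u1) = (cA r)%:R / n%:R.
  case: (posnP (cA r)) => [->|h]; first by rewrite !mul0r.
  have := Ar h => rp.
  by rewrite /u1; field; rewrite !gt_eqF.
have hBv : (cB r)%:R * ((1 - r) * v2) = (cB r)%:R / n%:R.
  case: (posnP (cB r)) => [->|h]; first by rewrite !mul0r.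
  have := Br h => rp.
  by rewrite /v2; field; rewrite !gt_eqF // subr_gt0.
have hAu1 : (cA r)%:R * u1 <= 1.
  case: (posnP (cA r)) => [->|h]; first by rewrite mul0r.
  have := Ar h => rp.
  by rewrite /u1 ler_pdivrMr ?mul1r // mulr_gt0.
have hBv1 : (cB r)%:R * v2 <= 1.
  case: (posnP (cB r)) => [->|h]; first by rewrite mul0r.
  have := Br h => rp.
  by rewrite /v2 ler_pdivrMr ?mul1r // mulr_gt0 // subr_gt0.
exists (fun i => if r < p i then (u1, 0) else if p i < r then (0, v2) else (w1, w2)).
split; first by rewrite /in_simplex /=; split => //; split; lra.
split.
  move=> i /=.
  rewrite /nonneg2 /dot /belief /=.
  case: (ltgtP r (p i)) => hp.
  - have Apos : (0 < cA r)%N.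
      by rewrite /cA -has_count; apply/hasP; exists i => //; rewrite mem_enum.
    have rp := Ar Apos.
    have ru : r * u1 = n%:R^-1 by rewrite /u1; field; rewrite !gt_eqF.
    split; first by split => //; rewrite invr_ge0 mulr_ge0 // ler0n.
    split; first by rewrite mulr0 addr0 ru.
    move=> [y1 y2] [/= y1n y2n] hy.
    rewrite mulr0 addr0.
    have h : r * (p i * y1 + (1 - p i) * y2) <= p i * n%:R^-1 by nra.
    have -> : p i * u1 = (p i * n%:R^-1) / r by rewrite /u1; field; rewrite !gt_eqF.
    by rewrite ler_pdivlMr // mulrC.
  - have Bpos : (0 < cB r)%N.
      by rewrite /cB -has_count; apply/hasP; exists i => //; rewrite mem_enum.
    have rp := Br Bpos.
    have rp' : 0 < 1 - r by rewrite subr_gt0.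
    have rv : (1 - r) * v2 = n%:R^-1 by rewrite /v2; field; rewrite !gt_eqF.
    split; first by split => //=; rewrite invr_ge0 mulr_ge0 // ?ler0n // ltW.
    split; first by rewrite mulr0 add0r rv.
    move=> [y1 y2] [/= y1n y2n] hy.
    rewrite mulr0 add0r.
    have h : (1 - r) * (p i * y1 + (1 - p i) * y2) <= (1 - p i) * n%:R^-1 by nra.
    have -> : (1 - p i) * v2 = ((1 - p i) * n%:R^-1) / (1 - r) by rewrite /v2; field; rewrite !gt_eqF.
    by rewrite ler_pdivlMr // mulrC.
  - have Cpos : (0 < cC r)%N.
      by rewrite /cC -has_count; apply/hasP; exists i; rewrite ?mem_enum // hp.
    have CR : (cC r)%:R != 0 :> R by rewrite pnatr_eq0 -lt0n.
    have key : r * w1 + (1 - r) * w2 = n%:R^-1.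
      have -> : r * w1 + (1 - r) * w2 = (1 - (cA r)%:R * (r * u1) - (cB r)%:R * ((1 - r) * v2)) / (cC r)%:R.
        by rewrite /w1 /w2; field.
      rewrite hAu hBv -hABC; field.
      by rewrite CR andbT hABC gt_eqF.
    split; first by split; apply: divr_ge0; rewrite ?ler0n ?subr_ge0.
    split; first by rewrite key.
    move=> [y1 y2] [/= y1n y2n] hy.
    by rewrite -hp key.
split.
- rewrite (eq_bigr (fun i => (if r < p i then u1 else 0) + (if p i == r then w1 else 0))); last first.
    by move=> i _; case: ltgtP => _ /=; rewrite ?addr0 ?add0r.
  rewrite big_split /= !sum_ind -/(cA r) -/(cC r) -[u1 *+ _]mulr_natl -[w1 *+ _]mulr_natl.
  case: (posnP (cC r)) => [C0|Cp].
    rewrite C0 mul0r addr0.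
    have hAB := count3 r; rewrite C0 addn0 in hAB.
    have hAB' : (cA r)%:R + (cB r)%:R = n%:R :> R by rewrite -natrD hAB.
    have hnr : n%:R * r = (cA r)%:R by lra.
    have Apos : (0 < cA r)%N.
      case: (posnP (cA r)) => // A0.
      have : (0 < cB r)%N by lia.
      move/(@cB_pos r) => rp. rewrite A0 in hnr. nra.
    by rewrite /u1 hnr mulfV // pnatr_eq0 -lt0n.
  by rewrite /w1; field; rewrite pnatr_eq0 -lt0n.
- rewrite (eq_bigr (fun i => (if p i < r then v2 else 0) + (if p i == r then w2 else 0))); last first.
    by move=> i _; case: ltgtP => _ /=; rewrite ?addr0 ?add0r.
  rewrite big_split /= !sum_ind -/(cB r) -/(cC r) -[v2 *+ _]mulr_natl -[w2 *+ _]mulr_natl.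
  case: (posnP (cC r)) => [C0|Cp].
    rewrite C0 mul0r addr0.
    have hAB := count3 r; rewrite C0 addn0 in hAB.
    have hAB' : (cA r)%:R + (cB r)%:R = n%:R :> R by rewrite -natrD hAB.
    have hnr : n%:R * (1 - r) = (cB r)%:R by lra.
    have Bpos : (0 < cB r)%N.
      case: (posnP (cB r)) => // B0.
      have : (0 < cA r)%N by lia.
      move/(@cA_pos r) => rp. rewrite B0 in hnr. nra.
    by rewrite /v2 hnr mulfV // pnatr_eq0 -lt0n.
  by rewrite /w2; field; rewrite pnatr_eq0 -lt0n.
Qed.
End S.

Theorem proposition4 (R : realFieldType) (n : nat) (p : 'I_n -> R) :
  (0 < n)%N ->
  (forall i, 0 <= p i <= 1) ->
  (exists (rho : R * R) (x : 'I_n -> R * R), parimutuel_eq p rho x) /\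
  (forall (rho : R * R) (x : 'I_n -> R * R),
      parimutuel_eq p rho x -> is_med (med_list p) rho.1).
Proof.
move=> n0 p01; split.
  have [r [r01 [hA hB]]] := @exist_r R n p n0 p01.
  have [x hx] := @construct R n p n0 p01 r r01 hA hB.
  by exists (r, 1 - r), x.
move=> rho x hx.
have [r01 [hA hB]] := @eq_cond R n p n0 rho x hx.
exact: (@med_of R n p n0 p01 rho.1 r01) hA hB.
Qed.
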